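(* Let $1\le r\le s\le t$ and let $u=ABCd$, $v=A'B'C'd'$ be vertices of $E3C(r,s,t)$ with $A=A'$, $B=B'$, $C\ne C'$ and $d\ne d'$. Then there exist $2r+2$ pairwise internally disjoint $u$–$v$ paths in $E3C(r,s,t)$, each of length at most $t+6$ if $\{d,d'\}=\{0,1\}$ or $\{d,d'\}=\{0,2\}$, and each of length at most $t+8$ if $\{d,d'\}=\{1,2\}$.
   Context: The exchanged 3-ary $n$-cube $E3C(r,s,t)$ ($r,s,t\ge1$, $n=r+s+t+1$): vertices are strings written $x=ABCd$ with $A\in\{0,1,2\}^r$, $B\in\{0,1,2\}^s$, $C\in\{0,1,2\}^t$, $d\in\{0,1,2\}$. Two distinct vertices $x=ABCd$, $y=A'B'C'd'$ are adjacent iff one of: (E0) $A=A',B=B',C=C'$ and $d\ne d'$; (E1) $d=d'=0$, $A=A'$, $B=B'$ and $C,C'$ differ in exactly one position; (E2) $d=d'=1$, $A=A'$, $C=C'$ and $B,B'$ differ in exactly one position; (E3) $d=d'=2$, $B=B'$, $C=C'$ and $A,A'$ differ in exactly one position. Paths are internally disjoint if they share no vertices other than their endpoints; length = number of edges. *)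

(* Defs.v *)
From mathcomp Require Import all_boot.
Set Implicit Arguments. Unset Strict Implicit. Unset Printing Implicit Defensive.

(* Exchanged 3-ary n-cube E3C(r,s,t). A vertex ABCd is encoded as a 4-tuple
   (A, B, C, d) with A : 'I_r -> 'I_3, B : 'I_s -> 'I_3, C : 'I_t -> 'I_3, d : 'I_3. *)
Definition word (k : nat) := {ffun 'I_k -> 'I_3}.
Definition vertex (r s t : nat) : finType :=
  (word r * word s * word t * 'I_3)%type.

Definition vA r s t (x : vertex r s t) : word r := x.1.1.1.
Definition vB r s t (x : vertex r s t) : word s := x.1.1.2.
Definition vC r s t (x : vertex r s t) : word t := x.1.2.
Definition vd r s t (x : vertex r s t) : 'I_3 := x.2.

Definition diff1 k (X Y : word k) : bool := #|[pred i | X i != Y i]| == 1.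

Definition e3c_adj r s t (x y : vertex r s t) : bool :=
  (x != y) &&
  ( ((vA x == vA y) && (vB x == vB y) && (vC x == vC y) && (vd x != vd y))
 || ((val (vd x) == 0) && (val (vd y) == 0) && (vA x == vA y) && (vB x == vB y) && diff1 (vC x) (vC y))
 || ((val (vd x) == 1) && (val (vd y) == 1) && (vA x == vA y) && (vC x == vC y) && diff1 (vB x) (vB y))
 || ((val (vd x) == 2) && (val (vd y) == 2) && (vB x == vB y) && (vC x == vC y) && diff1 (vA x) (vA y)) ).

Definition is_path r s t (u v : vertex r s t) (p : seq (vertex r s t)) : bool :=
  [&& head v p == u, last u p == v, path (@e3c_adj r s t) u (behead p) & uniq p].

Definition plen T (p : seq T) : nat := (size p).-1.

Definition interior T (p : seq T) : seq T :=
  if p is x :: q then behead (belast x q) else [::].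

(* a family of paths indexed by I is pairwise internally disjoint:
   distinct paths share no internal vertex (and no internal vertex of one path
   lies on another path; as endpoints are common, this is the same as sharing
   no vertex other than the endpoints) *)
Definition int_disjoint (I : finType) (T : eqType) (P : I -> seq T) : Prop :=
  forall i j : I, i != j -> forall x : T, x \in interior (P i) -> x \in P j -> False.

(* Main.v *)
Require Import Defs.
From mathcomp Require Import all_boot zify.
Set Implicit Arguments. Unset Strict Implicit. Unset Printing Implicit Defensive.

Definition L0 : 'I_3 := @Ordinal 3 0 isT.
Definition L1 : 'I_3 := @Ordinal 3 1 isT.
Definition L2 : 'I_3 := @Ordinal 3 2 isT.

Definition inc (a : 'I_3) (b : bool) : 'I_3 := @Ordinal 3 ((a + 1 + b) %% 3) (@ltn_pmod _ 3 isT).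

Lemma inc_neq a b : inc a b != a.
Proof. by case: a => [[|[|[|]]] ?] //; case: b. Qed.

Lemma inc_inj a b b' : inc a b = inc a b' -> b = b'.
Proof. by case: a => [[|[|[|]]] ?] //; case: b; case: b'. Qed.

Definition sh k (X : word k) (i : nat) (b : bool) : word k :=
  [ffun x => if val x == i then inc (X x) b else X x].
Definition upd k (X : word k) (i : 'I_k) (a : 'I_3) : word k :=
  [ffun x => if x == i then a else X x].

Lemma diff1_sym k (X Y : word k) : diff1 X Y = diff1 Y X.
Proof. by rewrite /diff1; congr (_ == _); apply: eq_card => x; rewrite !inE eq_sym. Qed.

Lemma diff1_neq k (X Y : word k) : diff1 X Y -> X != Y.
Proof.
rewrite /diff1; apply: contraL => /eqP ->.
by rewrite (@eq_card0 _ [pred i | Y i != Y i]) // => x; rewrite !inE eqxx.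
Qed.

Lemma diff1_upd k (X : word k) i a : X i != a -> diff1 X (upd X i a).
Proof.
move=> H; rewrite /diff1; apply/eqP; apply: (@eq_trans _ _ #|pred1 i|); last exact: card1.
apply/eq_card => x.
rewrite !inE ffunE; case: (x =P i) => [->|/eqP /negbTE] //.
by rewrite eqxx.
Qed.

Lemma sh_upd k (X : word k) (i : 'I_k) b : sh X i b = upd X i (inc (X i) b).
Proof. by apply/ffunP => x; rewrite !ffunE; case: (x =P i) => [->|/eqP ne]; rewrite ?eqxx // (inj_eq val_inj) (negbTE ne). Qed.

Lemma diff1_sh k (X : word k) i b : i < k -> diff1 X (sh X i b).
Proof. move=> ik; rewrite (sh_upd X (Ordinal ik)); apply: diff1_upd; rewrite eq_sym inc_neq //. Qed.

Lemma sh_neq k (X : word k) i b : i < k -> sh X i b <> X.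
Proof. by move=> ik E; have := diff1_neq (diff1_sh X b ik); rewrite E eqxx. Qed.

Lemma sh_inj k (X : word k) i i' b b' : i < k -> i' < k ->
  sh X i b = sh X i' b' -> i = i' /\ b = b'.
Proof.
move=> ik i'k E.
have := congr1 (fun f : word k => f (Ordinal ik)) E; rewrite !ffunE /= eqxx.
case: (i =P i') => [<-|ne] F; last by move: (inc_neq (X (Ordinal ik)) b); rewrite F eqxx.
by split => //; apply: inc_inj F.
Qed.

Definition mk r s t (A : word r) (B : word s) (C : word t) (d : 'I_3) : vertex r s t := (A, B, C, d).

Lemma mk_eq r s t A B C d A' B' C' d' :
  (@mk r s t A B C d == mk A' B' C' d') = [&& A == A', B == B', C == C' & d == d'].
Proof. by rewrite /mk -!pair_eqE /= -!andbA. Qed.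

Lemma adj0 r s t A B C d d' : d != d' -> e3c_adj (@mk r s t A B C d) (mk A B C d').
Proof. move=> H; rewrite /e3c_adj mk_eq /vA /vB /vC /vd /= !eqxx H //. Qed.

Lemma adjC r s t A B C C' : diff1 C C' -> e3c_adj (@mk r s t A B C L0) (mk A B C' L0).
Proof.
move=> H; rewrite /e3c_adj mk_eq /vA /vB /vC /vd /= !eqxx H (negbTE (diff1_neq H)) /=.
done.
Qed.

Lemma adjB r s t A B B' C : diff1 B B' -> e3c_adj (@mk r s t A B C L1) (mk A B' C L1).
Proof.
move=> H; rewrite /e3c_adj mk_eq /vA /vB /vC /vd /= !eqxx H (negbTE (diff1_neq H)) /=.
done.
Qed.

Lemma adjA r s t A A' B C : diff1 A A' -> e3c_adj (@mk r s t A B C L2) (mk A' B C L2).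
Proof.
move=> H; rewrite /e3c_adj mk_eq /vA /vB /vC /vd /= !eqxx H (negbTE (diff1_neq H)) /=.
done.
Qed.

Lemma adj_sym r s t (x y : vertex r s t) : e3c_adj x y = e3c_adj y x.
Proof.
rewrite /e3c_adj eq_sym; congr (_ && _).
by rewrite ![vA y == _]eq_sym ![vB y == _]eq_sym ![vC y == _]eq_sym ![vd y == _]eq_sym
  (diff1_sym (vC x)) (diff1_sym (vB x)) (diff1_sym (vA x));
  case: (val (vd x) == 0); case: (val (vd y) == 0); case: (val (vd x) == 1); case: (val (vd y) == 1);
  case: (val (vd x) == 2); case: (val (vd y) == 2); rewrite /= ?andbF ?andbT ?andbA.
Qed.

Fixpoint walk k (Y X : word k) (ps : seq 'I_k) : seq (word k) :=
  if ps is i :: ps' then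
    if X i == Y i then walk Y X ps' else upd X i (Y i) :: walk Y (upd X i (Y i)) ps'
  else [::].
Definition chain k (X Y : word k) := X :: walk Y X (enum 'I_k).

Lemma upd_same k (X : word k) i a : X i = a -> upd X i a = X.
Proof. by move=> H; apply/ffunP => x; rewrite ffunE; case: (x =P i) => [->|]. Qed.

Lemma walk_path k (Y X : word k) ps : path (@diff1 k) X (walk Y X ps).
Proof.
elim: ps X => [|i ps IH] X //=.
case: ifP => H; first exact: IH.
by rewrite /= IH diff1_upd ?H.
Qed.

Lemma walk_last k (Y X : word k) ps :
  last X (walk Y X ps) = foldl (fun W i => upd W i (Y i)) X ps.
Proof.
elim: ps X => [|i ps IH] X //=.
by case: ifP => H; rewrite /= IH // upd_same //; apply/eqP.
Qed.

Lemma foldl_upd k (Y X : word k) ps x :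
  (foldl (fun W i => upd W i (Y i)) X ps) x = if x \in ps then Y x else X x.
Proof.
elim: ps X => [|i ps IH] X //=.
rewrite IH in_cons ffunE; case: (x =P i) => [->|] /=; first by case: ifP.
by [].
Qed.

Lemma chain_last k (X Y : word k) : last X (walk Y X (enum 'I_k)) = Y.
Proof. by apply/ffunP => x; rewrite walk_last foldl_upd mem_enum. Qed.

Lemma walk_size k (Y X : word k) ps : size (walk Y X ps) <= size ps.
Proof.
elim: ps X => [|i ps IH] X //=.
by case: ifP => _ /=; [apply: leqW|]; apply: IH.
Qed.

Lemma chain_size k (X Y : word k) : size (chain X Y) <= k.+1.
Proof. by rewrite /= ltnS; apply: leq_trans (walk_size _ _ _) _; rewrite size_enum_ord. Qed.

Lemma walk_mem k (Y X : word k) ps W : W \in walk Y X ps -> forall x, W x = X x \/ W x = Y x.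
Proof.
elim: ps X => [|i ps IH] X //=.
case: ifP => H; first exact: IH.
rewrite in_cons => /orP [/eqP -> x|/IH H' x].
  by rewrite ffunE; case: (x =P i) => [->|]; [right|left].
by case: (H' x) => ->; [rewrite ffunE; case: (x =P i) => [->|]; [right|left]|right].
Qed.

Lemma chain_mem k (X Y W : word k) : W \in chain X Y -> forall x, W x = X x \/ W x = Y x.
Proof. by rewrite in_cons => /orP [/eqP -> x|/walk_mem]; [left|]. Qed.

Definition agr k (Y W : word k) := [set x | W x == Y x].

Lemma walk_sorted k (Y X : word k) ps :
  path (fun W W' => agr Y W \proper agr Y W') X (walk Y X ps).
Proof.
elim: ps X => [|i ps IH] X //=.
case: ifP => H; first exact: IH.
rewrite /= IH andbT; apply/properP; split.
  by apply/subsetP => x; rewrite !inE ffunE; case: (x =P i) => [->|].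
by exists i; rewrite !inE ?ffunE ?eqxx ?H.
Qed.

Lemma chain_uniq k (X Y : word k) : uniq (chain X Y).
Proof.
apply: (@sorted_uniq _ (fun W W' => agr Y W \proper agr Y W')).
- by move=> a b c; apply: proper_trans.
- by move=> a; rewrite properxx.
- exact: walk_sorted.
Qed.


Definition cm_def r s t A B (X Y : word t) : seq (vertex r s t) := map (fun W => mk A B W L0) (chain X Y).
Fact cm_key : unit. Proof. exact: tt. Qed.
Definition cm := locked_with cm_key cm_def.
Lemma cmE : cm = cm_def. Proof. exact: unlock. Qed.

Lemma mem_cm r s t A B X Y A' B' C' d' :
  (@mk r s t A' B' C' d' \in cm A B X Y) = [&& A' == A, B' == B, C' \in chain X Y & d' == L0].
Proof.
rewrite cmE; apply/mapP/idP => [[W HW /eqP]|/and4P [/eqP -> /eqP -> H /eqP ->]]; last by exists C'.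
by rewrite mk_eq => /and4P [-> -> /eqP -> ->]; rewrite HW.
Qed.

Lemma cm_uniq r s t A B (X Y : word t) : uniq (@cm r s t A B X Y).
Proof.
rewrite cmE map_inj_uniq ?chain_uniq // => W W' /eqP; rewrite mk_eq.
by case/and4P => _ _ /eqP.
Qed.

Lemma cm_last r s t A B (X Y : word t) x : last x (@cm r s t A B X Y) = mk A B Y L0.
Proof.
rewrite cmE /cm_def /chain /=; change (mk A B X L0) with ((fun W => @mk r s t A B W L0) X).
by rewrite last_map chain_last.
Qed.

Lemma cm_path r s t A B (X Y : word t) x :
  e3c_adj x (mk A B X L0) -> path (@e3c_adj r s t) x (@cm r s t A B X Y).
Proof.
move=> H; rewrite cmE /cm_def /chain /= H /=.
change (mk A B X L0) with ((fun W => @mk r s t A B W L0) X); rewrite path_map.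
by apply: sub_path (walk_path Y X _) => W W' /=; apply: adjC.
Qed.

Lemma cm_size r s t A B (X Y : word t) : size (@cm r s t A B X Y) <= t.+1.
Proof. by rewrite cmE size_map chain_size. Qed.

Lemma shape_path r s t (u v : vertex r s t) pre A B X Y p1 post :
  path (@e3c_adj r s t) u pre -> e3c_adj (last u pre) (mk A B X L0) ->
  e3c_adj (mk A B Y L0) p1 -> path (@e3c_adj r s t) p1 post -> last p1 post = v ->
  uniq (u :: pre ++ p1 :: post) -> (forall x, x \in u :: pre ++ p1 :: post -> x \notin cm A B X Y) ->
  is_path u v (u :: pre ++ cm A B X Y ++ p1 :: post).
Proof.
move=> H1 H2 H3 H4 H5 U N.
rewrite /is_path; apply/and4P; split.
- by [].
- by rewrite [last _ _]/= !last_cat cm_last [last _ _]/= H5.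
- rewrite [behead _]/= cat_path H1 cat_path cm_path // cm_last [path _ _ (_ :: _)]/= H3 H4 //.
- have P : perm_eq ((u :: pre) ++ cm A B X Y ++ p1 :: post) (cm A B X Y ++ (u :: pre) ++ p1 :: post).
    by rewrite perm_catCA.
  rewrite -cat_cons (perm_uniq P) cat_uniq cm_uniq U andbT.
  by apply/hasPn => x Hx; apply: N.
Qed.

Lemma cm_inv r s t A B X Y (x : vertex r s t) :
  x \in cm A B X Y -> [/\ vA x = A, vB x = B & vd x = L0].
Proof.
case: x => [[[a b] c] l]; rewrite -[(a,b,c,l)]/(mk a b c l) mem_cm.
by case/and4P => /eqP -> /eqP -> _ /eqP ->.
Qed.

Lemma plen_shape T (u : T) pre cmid post : plen (u :: pre ++ cmid ++ post) = size pre + size cmid + size post.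
Proof. by rewrite /plen /= !size_cat addnA. Qed.

Lemma half_lt n r : n < 2 * r -> n./2 < r.
Proof. by move=> H; rewrite -(ltn_pmul2l (isT : 0 < 2)) (leq_ltn_trans _ H) // mul2n -{2}(odd_double_half n) leq_addl. Qed.

Lemma odd_half_inj n m : odd n = odd m -> n./2 = m./2 -> n = m.
Proof. by move=> H1 H2; rewrite -(odd_double_half n) -(odd_double_half m) H1 H2. Qed.

Definition shn k (X : word k) n := sh X n./2 (odd n).

Lemma shn_neq k (X : word k) n : n < 2 * k -> (shn X n == X) = false.
Proof. by move=> H; apply/eqP/sh_neq/half_lt. Qed.

Lemma shn_neq' k (X : word k) n : n < 2 * k -> (X == shn X n) = false.
Proof. by move=> H; rewrite eq_sym shn_neq. Qed.

Lemma shn_inj k (X : word k) n m : n < 2 * k -> m < 2 * k -> shn X n = shn X m -> n = m.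
Proof. by move=> Hn Hm /(sh_inj (half_lt Hn) (half_lt Hm)) [] ? ?; apply: odd_half_inj. Qed.

Lemma shn_eq k (X : word k) n m : n < 2 * k -> m < 2 * k -> (shn X n == shn X m) = (n == m).
Proof. by move=> Hn Hm; apply/eqP/eqP => [/shn_inj|->] //; apply. Qed.

Lemma diff1_shn k (X : word k) n : n < 2 * k -> diff1 X (shn X n).
Proof. by move=> H; apply/diff1_sh/half_lt. Qed.

Lemma diff1_shn' k (X : word k) n : n < 2 * k -> diff1 (shn X n) X.
Proof. by move=> H; rewrite diff1_sym; apply/diff1_sh/half_lt. Qed.

Lemma L01 : (L0 == L1) = false. Proof. by []. Qed.
Lemma L02 : (L0 == L2) = false. Proof. by []. Qed.
Lemma L12 : (L1 == L2) = false. Proof. by []. Qed.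
Lemma L10 : (L1 == L0) = false. Proof. by []. Qed.
Lemma L20 : (L2 == L0) = false. Proof. by []. Qed.
Lemma L21 : (L2 == L1) = false. Proof. by []. Qed.

Definition good r s t (u v : vertex r s t) (m : nat) (F : nat -> seq (vertex r s t)) :=
  [/\ (forall n, n < 2 * r + 2 -> is_path u v (F n)),
      (forall n n', n < 2 * r + 2 -> n' < 2 * r + 2 -> forall x, x \in F n -> x \in F n' -> x = u \/ x = v \/ n = n')
    & (forall n, n < 2 * r + 2 -> plen (F n) <= m)].

Ltac vs := rewrite ?mem_cm ?mk_eq ?eqxx ?shn_neq ?shn_neq' ?L01 ?L02 ?L10 ?L12 ?L20 ?L21 ?andbF ?andFb //.
Ltac notin := let x := fresh "x" in move=> x; rewrite !inE;
  repeat (case/orP; first by move/eqP->; vs); move/eqP->; vs.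


Ltac dis := repeat match goal with
 | H : _ /\ _ |- _ => destruct H
 | H : _ \/ _ |- _ => destruct H
 end.

Section Case12.
Variables (r s t : nat) (A : word r) (B : word s) (C C' : word t).
Hypotheses (r1 : 0 < r) (rs : r <= s) (CC : C != C').

Local Notation V := (vertex r s t).
Let u : V := mk A B C L1.
Let v : V := mk A B C' L2.
Local Notation Ab n := (shn A n).
Local Notation Bb n := (shn B n).

Definition E12 : seq V := u :: [:: mk A (Bb 0) C L1] ++ cm A (Bb 0) C C' ++
   mk A (Bb 0) C' L1 :: [:: mk A B C' L1; v].
Definition P12 n : seq V := u :: [:: mk A (Bb n) C L1; mk A (Bb n) C L2; mk (Ab n) (Bb n) C L2] ++
   cm (Ab n) (Bb n) C C' ++ mk (Ab n) (Bb n) C' L1 :: [:: mk (Ab n) B C' L1; mk (Ab n) B C' L2; v].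
Definition D12 : seq V := u :: [::] ++ cm A B C C' ++ v :: [::].
Definition D12' : seq V := u :: [:: mk A B C L2; mk (Ab 0) B C L2] ++ cm (Ab 0) B C C' ++
   mk (Ab 0) B C' L2 :: [:: v].

Definition F12 n := if n == 0 then E12 else if n < 2 * r then P12 n else if n == 2 * r then D12 else D12'.

Lemma rs2 n : n < 2 * r -> n < 2 * s.
Proof. by move=> H; apply: leq_trans H _; rewrite leq_mul2l rs orbT. Qed.

Lemma F12_path n : n < 2 * r + 2 -> is_path u v (F12 n).
Proof.
have r0 : 0 < 2 * r by rewrite muln_gt0.
have s0 : 0 < 2 * s by apply: rs2.
have CC1 := negbTE CC; have CC2 : (C' == C) = false by rewrite eq_sym.
move=> Hn; rewrite /F12; case: ifP => [_|/negbT n0].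
  apply: shape_path => /=.
  - by rewrite andbT adjB // diff1_shn.
  - by apply: adj0.
  - by apply: adj0.
  - by rewrite adjB ?diff1_shn' // adj0.
  - by [].
  - by rewrite !inE; vs; rewrite ?CC1 ?CC2 ?andbF.
  - by rewrite /u /v; notin.
case: ifP => [Hr|/negbT Hr].
  have Hs := rs2 Hr.
  apply: shape_path => /=.
  - by rewrite adjB ?diff1_shn // adj0 // adjA ?diff1_shn.
  - by apply: adj0.
  - by apply: adj0.
  - by rewrite adjB ?diff1_shn' // adj0 //= adjA ?diff1_shn'.
  - by [].
  - rewrite /u /v !inE; vs; rewrite ?CC1 ?CC2 ?andbF //.
  - by rewrite /u /v; notin.
case: ifP => [/eqP Hr2|/negbT Hr2].
  apply: shape_path => /=.
  - by [].
  - by apply: adj0.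
  - by apply: adj0.
  - by [].
  - by [].
  - by rewrite /u /v !inE; vs; rewrite ?CC1 ?CC2 ?andbF.
  - by rewrite /u /v; notin.
apply: shape_path => /=.
- by rewrite adj0 // adjA ?diff1_shn.
- by apply: adj0.
- by apply: adj0.
- by rewrite /= adjA ?diff1_shn'.
- by [].
- by rewrite /u /v !inE; vs; rewrite ?CC1 ?CC2 ?andbF.
- by rewrite /u /v; notin.
Qed.

Definition Q12 n (a : word r) (b : word s) (l : 'I_3) : Prop :=
  if n == 0 then (a = A /\ b = Bb 0) \/ (a = A /\ b = B /\ l = L1)
  else if n < 2 * r then (a = A /\ b = Bb n) \/ (a = Ab n /\ b = Bb n) \/ (a = Ab n /\ b = B)
  else if n == 2 * r then a = A /\ b = B /\ l = L0
  else (a = A /\ b = B /\ l = L2) \/ (a = Ab 0 /\ b = B).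

Ltac Qs := first [ left; solve [repeat split] | right; Qs | solve [repeat split] ].
Ltac mone := first [ move/eqP -> | let H1 := fresh in let H2 := fresh in let H3 := fresh in case/cm_inv => H1 H2 H3; rewrite ?H1 ?H2 ?H3 ];
  first [ by left | by right; left | right; right; rewrite /=; Qs ].
Ltac mcase := first [ case/orP; [mone | mcase] | mone ].

Lemma F12_mem n x : n < 2 * r + 2 -> x \in F12 n -> x = u \/ x = v \/ Q12 n (vA x) (vB x) (vd x).
Proof.
move=> Hn; rewrite /F12 /Q12; case: ifP => h1.
  by rewrite !(in_cons, mem_cat, in_nil, orbF, orFb); mcase.
case: ifP => h2.
  by rewrite !(in_cons, mem_cat, in_nil, orbF, orFb); mcase.
case: ifP => h3.
  by rewrite !(in_cons, mem_cat, in_nil, orbF, orFb); mcase.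
by rewrite !(in_cons, mem_cat, in_nil, orbF, orFb); mcase.
Qed.

Ltac sc := first [ done | lia | (apply: rs2; lia) ].
Ltac wc := match goal with
 | H : ?X = shn ?X ?m |- _ => exfalso; move/eqP: H; rewrite shn_neq'; [done|sc]
 | H : shn ?X ?m = ?X |- _ => exfalso; move/eqP: H; rewrite shn_neq; [done|sc]
 | H : shn ?X ?m = shn ?X ?m' |- _ =>
     let E := fresh in have E : m = m' by apply: (shn_inj _ _ H); sc
 | H : @eq (ordinal 3) ?a ?b |- _ => by move/(congr1 val): H
 end.
Ltac fin := solve [ lia | repeat (wc; try lia) ].

Lemma Q12_uniq n n' a b l : n < 2 * r + 2 -> n' < 2 * r + 2 ->
  Q12 n a b l -> Q12 n' a b l -> n = n'.
Proof.
have r0 : 0 < 2 * r by rewrite muln_gt0.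
move=> Hn Hn'; rewrite /Q12.
case: ifP => h1; [|case: ifP => h2; [|case: ifP => h3]];
case: ifP => h1'; try (case: ifP => h2'; try case: ifP => h3');
move=> H1 H2; dis; subst; fin.
Qed.

Lemma good12 : good u v (t + 8) F12.
Proof.
split.
- exact: F12_path.
- move=> n n' Hn Hn' x H1 H2.
  case: (F12_mem Hn H1) => [->|[->|Q1]]; [by left|by right; left|].
  case: (F12_mem Hn' H2) => [->|[->|Q2]]; [by left|by right; left|].
  by right; right; apply: (Q12_uniq Hn Hn' Q1 Q2).
- move=> n Hn; rewrite /F12.
  case: ifP => _; [|case: ifP => _; [|case: ifP => _]];
  rewrite plen_shape /=; set z := size (cm _ _ _ _); (have : z <= t.+1 by exact: cm_size); lia.
Qed.
End Case12.

Lemma cm_inv' r s t A B X Y (x : vertex r s t) :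
  x \in cm A B X Y -> [/\ vA x = A, vB x = B, vd x = L0 & vC x \in chain X Y].
Proof.
case: x => [[[a b] c] l]; rewrite -[(a,b,c,l)]/(mk a b c l) mem_cm.
by case/and4P => /eqP -> /eqP -> ? /eqP ->.
Qed.

Lemma nonspecial t (C C' : word t) (j : 'I_t) n : C j != C' j -> n < 2 * t ->
  shn C' n != upd C' j (C j) -> shn C' n j != C j.
Proof.
move=> Cj Hn; apply: contra => /eqP E; apply/eqP.
have hn := half_lt Hn.
rewrite /shn (sh_upd C' (Ordinal hn)) in E *.
case: (eqVneq (Ordinal hn) j) => [ej|nej].
  subst j; congr upd; move: E; rewrite ffunE eqxx => ->.
  by [].
move: E; rewrite ffunE eq_sym (negbTE nej) => E.
by move: Cj; rewrite E eqxx.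
Qed.

Lemma notin_chainY t (C C' : word t) (j : 'I_t) : C j != C' j -> C' \notin chain C (upd C' j (C j)).
Proof.
move=> Cj; apply/negP => /chain_mem /(_ j); rewrite ffunE eqxx => [[]] E;
by move: Cj; rewrite E eqxx.
Qed.

Lemma chainY_j t (C C' W : word t) (j : 'I_t) : W \in chain C (upd C' j (C j)) -> W j = C j.
Proof. by move/chain_mem/(_ j); rewrite ffunE eqxx => [[]]. Qed.

Lemma diff1_Y t (C C' : word t) (j : 'I_t) : C j != C' j -> diff1 (upd C' j (C j)) C'.
Proof. by move=> Cj; rewrite diff1_sym diff1_upd // eq_sym. Qed.


Section Case20.
Variables (r s t : nat) (A : word r) (B : word s) (C C' : word t) (j : 'I_t).
Hypotheses (r1 : 0 < r) (rs : r <= s) (st : s <= t) (Cj : C j != C' j).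

Local Notation V := (vertex r s t).
Let u : V := mk A B C L2.
Let v : V := mk A B C' L0.
Local Notation Ab n := (shn A n).
Local Notation Bb n := (shn B n).
Local Notation Yp n := (shn C' n).
Local Notation Y := (upd C' j (C j)).

Definition P20 n : seq V := u :: [:: mk (Ab n) B C L2] ++ cm (Ab n) B C (Yp n) ++
   mk (Ab n) B (Yp n) L2 :: [:: mk A B (Yp n) L2; mk A B (Yp n) L0; v].
Definition S20 n : seq V := u :: [:: mk (Ab n) B C L2] ++ cm (Ab n) B C C' ++
   mk (Ab n) B C' L2 :: [:: mk A B C' L2; v].
Definition D20 : seq V := u :: [::] ++ cm A B C Y ++ v :: [::].
Definition E20 : seq V := u :: [:: mk A B C L1; mk A (Bb 0) C L1] ++ cm A (Bb 0) C C' ++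
   mk A (Bb 0) C' L1 :: [:: mk A B C' L1; v].

Definition F20 n := if n < 2 * r then (if Yp n == Y then S20 n else P20 n)
  else if n == 2 * r then D20 else E20.

Lemma rs2' n : n < 2 * r -> n < 2 * s.
Proof. by move=> H; apply: leq_trans H _; rewrite leq_mul2l rs orbT. Qed.
Lemma rt2 n : n < 2 * r -> n < 2 * t.
Proof. by move=> H; apply: leq_trans H _; rewrite leq_mul2l (leq_trans rs st) orbT. Qed.

Lemma F20_path n : n < 2 * r + 2 -> is_path u v (F20 n).
Proof.
have r0 : 0 < 2 * r by rewrite muln_gt0.
have s0 : 0 < 2 * s by apply: rs2'.
have CC : C != C' by apply: contraNneq Cj => ->.
have CC1 := negbTE CC; have CC2 : (C' == C) = false by rewrite eq_sym.
move=> Hn; rewrite /F20; case: ifP => [Hr|/negbT Hr].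
  have Ht := rt2 Hr.
  have Yn : (Yp n == C') = false by rewrite shn_neq.
  have Yn' : (C' == Yp n) = false by rewrite shn_neq'.
  case: ifP => [/eqP Sp|/negbT Sp].
    apply: shape_path => /=.
    - by rewrite andbT adjA // diff1_shn.
    - by apply: adj0.
    - by apply: adj0.
    - by rewrite adjA ?diff1_shn' // adj0.
    - by [].
    - by rewrite /u /v !inE; vs; rewrite ?CC1 ?CC2 ?andbF.
    - by rewrite /u /v; notin.
  have Ns := nonspecial Cj Ht Sp.
  have YC : (Yp n == C) = false by apply: contraNF Ns => /eqP ->.
  have YC' : (C == Yp n) = false by rewrite eq_sym.
  apply: shape_path => /=.
  - by rewrite andbT adjA // diff1_shn.
  - by apply: adj0.
  - by apply: adj0.
  - by rewrite adjA ?diff1_shn' // adj0 //= adjC // diff1_shn'.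
  - by [].
  - by rewrite /u /v !inE; vs; rewrite ?CC1 ?CC2 ?Yn ?Yn' ?YC ?YC' ?andbF.
  - by rewrite /u /v; notin.
case: ifP => [/eqP Hr2|/negbT Hr2].
  apply: shape_path => /=.
  - by [].
  - by apply: adj0.
  - by apply: adjC; apply: diff1_Y.
  - by [].
  - by [].
  - by rewrite /u /v !inE; vs; rewrite ?CC1 ?CC2 ?andbF.
  - rewrite /u /v; move=> x; rewrite !inE => /orP [] /eqP ->; vs.
    by rewrite (negbTE (notin_chainY Cj)) andbF.
apply: shape_path => /=.
- by rewrite andbT adj0 // adjB // diff1_shn.
- by apply: adj0.
- by apply: adj0.
- by rewrite adjB ?diff1_shn' // adj0.
- by [].
- by rewrite /u /v !inE; vs; rewrite ?CC1 ?CC2 ?andbF.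
- by rewrite /u /v; notin.
Qed.

Definition Q20 n (a : word r) (b : word s) (c : word t) (l : 'I_3) : Prop :=
  if n < 2 * r then
    if Yp n == Y then Yp n = Y /\ ((a = Ab n /\ b = B) \/ (a = A /\ b = B /\ c = C' /\ l = L2))
    else (a = Ab n /\ b = B) \/ (a = A /\ b = B /\ c = Yp n /\ c j != C j /\ (l = L2 \/ l = L0))
  else if n == 2 * r then a = A /\ b = B /\ l = L0 /\ c j = C j
  else (a = A /\ b = Bb 0) \/ (a = A /\ b = B /\ l = L1).

Ltac Qs' := first [ left; solve [repeat split; try done; first [by left | by right]] | right; Qs' | solve [repeat split; try done; first [by left | by right]] ].
Ltac mone' := first [ move/eqP -> | let H1 := fresh in let H2 := fresh in let H3 := fresh in
   case/cm_inv => H1 H2 H3; rewrite ?H1 ?H2 ?H3 ];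
  first [ by left | by right; left | right; right; rewrite /=; Qs' ].
Ltac mcase' := first [ case/orP; [mone' | mcase'] | mone' ].

Lemma F20_mem n x : n < 2 * r + 2 -> x \in F20 n -> x = u \/ x = v \/ Q20 n (vA x) (vB x) (vC x) (vd x).
Proof.
move=> Hn; rewrite /F20 /Q20; case: ifP => h1.
  have Ht := rt2 h1.
  case: ifP => [Sp|/negbT Sp].
    rewrite !(in_cons, mem_cat, in_nil, orbF, orFb) => H.
    suff : x = u \/ x = v \/ (vA x = Ab n /\ vB x = B \/ vA x = A /\ vB x = B /\ vC x = C' /\ vd x = L2).
      by case=> [|[|]]; [left|right; left|right; right; split => //; apply/eqP].
    by move: H; mcase'.
  have Ns := nonspecial Cj Ht Sp.
  by rewrite !(in_cons, mem_cat, in_nil, orbF, orFb); mcase'.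
case: ifP => h3.
  rewrite !(in_cons, mem_cat, in_nil, orbF, orFb) => /orP [/eqP ->|/orP [|/eqP ->]];
    [by left| |by right; left].
  case/cm_inv' => -> -> -> /chainY_j; right; right; by repeat split.
by rewrite !(in_cons, mem_cat, in_nil, orbF, orFb); mcase'.
Qed.

Ltac sc := first [ done | lia | (apply: rs2'; lia) | (apply: rt2; lia) ].
Ltac wc := match goal with
 | H : is_true (?x != ?y), H' : ?x = ?y |- _ => by rewrite H' eqxx in H
 | H1 : shn ?X ?m = ?Z, H2 : shn ?X ?m' = ?Z |- _ => rewrite -H2 in H1; clear H2
 | H : ?X = shn ?X ?m |- _ => exfalso; move/eqP: H; rewrite shn_neq'; [done|sc]
 | H : shn ?X ?m = ?X |- _ => exfalso; move/eqP: H; rewrite shn_neq; [done|sc]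
 | H : shn ?X ?m = shn ?X ?m' |- _ =>
     let E := fresh in have E : m = m' by apply: (shn_inj _ _ H); sc
 | H : @eq (ordinal 3) ?a ?b |- _ => by move/(congr1 val): H
 end.
Ltac fin := solve [ lia | repeat (wc; try lia) ].

Lemma Q20_uniq n n' a b c l : n < 2 * r + 2 -> n' < 2 * r + 2 ->
  Q20 n a b c l -> Q20 n' a b c l -> n = n'.
Proof.
have r0 : 0 < 2 * r by rewrite muln_gt0.
move=> Hn Hn'; rewrite /Q20.
case: ifP => h1; [case: ifP => h2|case: ifP => h2];
case: ifP => h1'; try (case: ifP => h2');
move=> H1 H2; dis; subst; fin.
Qed.

Lemma good20 : good u v (t + 6) F20.
Proof.
split.
- exact: F20_path.
- move=> n n' Hn Hn' x H1 H2.
  case: (F20_mem Hn H1) => [->|[->|Q1]]; [by left|by right; left|].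
  case: (F20_mem Hn' H2) => [->|[->|Q2]]; [by left|by right; left|].
  by right; right; apply: (Q20_uniq Hn Hn' Q1 Q2).
- move=> n Hn; rewrite /F20.
  case: ifP => _; [case: ifP => _|case: ifP => _];
  rewrite plen_shape /=; set z := size (cm _ _ _ _); (have : z <= t.+1 by exact: cm_size); lia.
Qed.
End Case20.

Section Case10.
Variables (r s t : nat) (A : word r) (B : word s) (C C' : word t) (j : 'I_t).
Hypotheses (r1 : 0 < r) (rs : r <= s) (st : s <= t) (Cj : C j != C' j).

Local Notation V := (vertex r s t).
Let u : V := mk A B C L1.
Let v : V := mk A B C' L0.
Local Notation Ab n := (shn A n).
Local Notation Bb n := (shn B n).
Local Notation Yp n := (shn C' n).
Local Notation Y := (upd C' j (C j)).

Definition P10 n : seq V := u :: [:: mk A (Bb n) C L1] ++ cm A (Bb n) C (Yp n) ++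
   mk A (Bb n) (Yp n) L1 :: [:: mk A B (Yp n) L1; mk A B (Yp n) L0; v].
Definition S10 n : seq V := u :: [:: mk A (Bb n) C L1] ++ cm A (Bb n) C C' ++
   mk A (Bb n) C' L1 :: [:: mk A B C' L1; v].
Definition D10 : seq V := u :: [::] ++ cm A B C Y ++ v :: [::].
Definition E10 : seq V := u :: [:: mk A B C L2; mk (Ab 0) B C L2] ++ cm (Ab 0) B C C' ++
   mk (Ab 0) B C' L2 :: [:: mk A B C' L2; v].

Definition F10 n := if n < 2 * r then (if Yp n == Y then S10 n else P10 n)
  else if n == 2 * r then D10 else E10.

Lemma rs2b n : n < 2 * r -> n < 2 * s.
Proof. by move=> H; apply: leq_trans H _; rewrite leq_mul2l rs orbT. Qed.
Lemma rt2b n : n < 2 * r -> n < 2 * t.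
Proof. by move=> H; apply: leq_trans H _; rewrite leq_mul2l (leq_trans rs st) orbT. Qed.

Lemma F10_path n : n < 2 * r + 2 -> is_path u v (F10 n).
Proof.
have r0 : 0 < 2 * r by rewrite muln_gt0.
have s0 : 0 < 2 * s by apply: rs2b.
have CC : C != C' by apply: contraNneq Cj => ->.
have CC1 := negbTE CC; have CC2 : (C' == C) = false by rewrite eq_sym.
move=> Hn; rewrite /F10; case: ifP => [Hr|/negbT Hr].
  have Ht := rt2b Hr.
  have Hs := rs2b Hr.
  have Yn : (Yp n == C') = false by rewrite shn_neq.
  have Yn' : (C' == Yp n) = false by rewrite shn_neq'.
  case: ifP => [/eqP Sp|/negbT Sp].
    apply: shape_path => /=.
    - by rewrite andbT adjB // ?diff1_shn //; apply: rs2b.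
    - by apply: adj0.
    - by apply: adj0.
    - by rewrite adjB ?diff1_shn' // ?adj0 //; apply: rs2b.
    - by [].
    - by rewrite /u /v !inE; vs; rewrite ?CC1 ?CC2 ?andbF.
    - by rewrite /u /v; notin.
  have Ns := nonspecial Cj Ht Sp.
  have YC : (Yp n == C) = false by apply: contraNF Ns => /eqP ->.
  have YC' : (C == Yp n) = false by rewrite eq_sym.
  apply: shape_path => /=.
  - by rewrite andbT adjB // ?diff1_shn //; apply: rs2b.
  - by apply: adj0.
  - by apply: adj0.
  - by rewrite adjB ?diff1_shn' // ?adj0 //= ?adjC // ?diff1_shn' //; apply: rs2b.
  - by [].
  - by rewrite /u /v !inE; vs; rewrite ?CC1 ?CC2 ?Yn ?Yn' ?YC ?YC' ?andbF.
  - by rewrite /u /v; notin.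
case: ifP => [/eqP Hr2|/negbT Hr2].
  apply: shape_path => /=.
  - by [].
  - by apply: adj0.
  - by apply: adjC; apply: diff1_Y.
  - by [].
  - by [].
  - by rewrite /u /v !inE; vs; rewrite ?CC1 ?CC2 ?andbF.
  - rewrite /u /v; move=> x; rewrite !inE => /orP [] /eqP ->; vs.
    by rewrite (negbTE (notin_chainY Cj)) andbF.
apply: shape_path => /=.
- by rewrite andbT adj0 // adjA // diff1_shn.
- by apply: adj0.
- by apply: adj0.
- by rewrite adjA ?diff1_shn' // adj0.
- by [].
- by rewrite /u /v !inE; vs; rewrite ?CC1 ?CC2 ?andbF.
- by rewrite /u /v; notin.
Qed.

Definition Q10 n (a : word r) (b : word s) (c : word t) (l : 'I_3) : Prop :=
  if n < 2 * r then
    if Yp n == Y then Yp n = Y /\ ((a = A /\ b = Bb n) \/ (a = A /\ b = B /\ c = C' /\ l = L1))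
    else (a = A /\ b = Bb n) \/ (a = A /\ b = B /\ c = Yp n /\ c j != C j /\ (l = L1 \/ l = L0))
  else if n == 2 * r then a = A /\ b = B /\ l = L0 /\ c j = C j
  else (a = Ab 0 /\ b = B) \/ (a = A /\ b = B /\ l = L2).

Ltac Qsb := first [ left; solve [repeat split; try done; first [by left | by right]] | right; Qsb | solve [repeat split; try done; first [by left | by right]] ].
Ltac mone' := first [ move/eqP -> | let H1 := fresh in let H2 := fresh in let H3 := fresh in
   case/cm_inv => H1 H2 H3; rewrite ?H1 ?H2 ?H3 ];
  first [ by left | by right; left | right; right; rewrite /=; Qsb ].
Ltac mcase' := first [ case/orP; [mone' | mcase'] | mone' ].

Lemma F10_mem n x : n < 2 * r + 2 -> x \in F10 n -> x = u \/ x = v \/ Q10 n (vA x) (vB x) (vC x) (vd x).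
Proof.
move=> Hn; rewrite /F10 /Q10; case: ifP => h1.
  have Ht := rt2b h1.
  have Hs := rs2b h1.
  case: ifP => [Sp|/negbT Sp].
    rewrite !(in_cons, mem_cat, in_nil, orbF, orFb) => H.
    suff : x = u \/ x = v \/ (vA x = A /\ vB x = Bb n \/ vA x = A /\ vB x = B /\ vC x = C' /\ vd x = L1).
      by case=> [|[|]]; [left|right; left|right; right; split => //; apply/eqP].
    by move: H; mcase'.
  have Ns := nonspecial Cj Ht Sp.
  by rewrite !(in_cons, mem_cat, in_nil, orbF, orFb); mcase'.
case: ifP => h3.
  rewrite !(in_cons, mem_cat, in_nil, orbF, orFb) => /orP [/eqP ->|/orP [|/eqP ->]];
    [by left| |by right; left].
  case/cm_inv' => -> -> -> /chainY_j; right; right; by repeat split.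
by rewrite !(in_cons, mem_cat, in_nil, orbF, orFb); mcase'.
Qed.

Ltac sc := first [ done | lia | (apply: rs2b; lia) | (apply: rt2b; lia) ].
Ltac wc := match goal with
 | H : is_true (?x != ?y), H' : ?x = ?y |- _ => by rewrite H' eqxx in H
 | H1 : shn ?X ?m = ?Z, H2 : shn ?X ?m' = ?Z |- _ => rewrite -H2 in H1; clear H2
 | H : ?X = shn ?X ?m |- _ => exfalso; move/eqP: H; rewrite shn_neq'; [done|sc]
 | H : shn ?X ?m = ?X |- _ => exfalso; move/eqP: H; rewrite shn_neq; [done|sc]
 | H : shn ?X ?m = shn ?X ?m' |- _ =>
     let E := fresh in have E : m = m' by apply: (shn_inj _ _ H); sc
 | H : @eq (ordinal 3) ?a ?b |- _ => by move/(congr1 val): H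
 end.
Ltac fin := solve [ lia | repeat (wc; try lia) ].

Lemma Q10_uniq n n' a b c l : n < 2 * r + 2 -> n' < 2 * r + 2 ->
  Q10 n a b c l -> Q10 n' a b c l -> n = n'.
Proof.
have r0 : 0 < 2 * r by rewrite muln_gt0.
move=> Hn Hn'; rewrite /Q10.
case: ifP => h1; [case: ifP => h2|case: ifP => h2];
case: ifP => h1'; try (case: ifP => h2');
move=> H1 H2; dis; subst; fin.
Qed.

Lemma good10 : good u v (t + 6) F10.
Proof.
split.
- exact: F10_path.
- move=> n n' Hn Hn' x H1 H2.
  case: (F10_mem Hn H1) => [->|[->|Q1]]; [by left|by right; left|].
  case: (F10_mem Hn' H2) => [->|[->|Q2]]; [by left|by right; left|].
  by right; right; apply: (Q10_uniq Hn Hn' Q1 Q2).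
- move=> n Hn; rewrite /F10.
  case: ifP => _; [case: ifP => _|case: ifP => _];
  rewrite plen_shape /=; set z := size (cm _ _ _ _); (have : z <= t.+1 by exact: cm_size); lia.
Qed.
End Case10.

Lemma is_path_rev r s t (u v : vertex r s t) p : is_path u v p -> is_path v u (rev p).
Proof.
case: p => [|x q] /and4P [/= /eqP hu /eqP hv P U].
  by rewrite /is_path /= hu !eqxx.
subst x; rewrite /is_path rev_uniq [uniq (_ :: _)]/= U andbT.
rewrite lastI rev_rcons /= hv eqxx /=.
have := rev_path (@e3c_adj r s t) u q; rewrite hv => ->.
apply/andP; split; last by apply: sub_path P => a b; rewrite adj_sym.
case: q hv {P U} => [|y q] /= hv; first by rewrite -hv.
by rewrite rev_cons last_rcons.
Qed.

Lemma good_rev r s t (u v : vertex r s t) m F : good u v m F -> good v u m (fun n => rev (F n)).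
Proof.
case=> H1 H2 H3; split.
- by move=> n Hn; apply: is_path_rev; apply: H1.
- move=> n n' Hn Hn' x; rewrite !mem_rev => X1 X2.
  by case: (H2 n n' Hn Hn' x X1 X2) => [|[|]]; [right; left|left|right; right].
- by move=> n Hn; rewrite /plen size_rev; apply: H3.
Qed.

Lemma interior_mem (T : eqType) (u v : T) (p : seq T) x : head v p = u -> last u p = v -> uniq p ->
  x \in interior p -> [/\ x \in p, x != u & x != v].
Proof.
case: p => [|y q] //= -> hv.
case/lastP: q hv => [|q z] //; rewrite last_rcons => -> /andP [nu U].
rewrite belast_rcons /= => xq.
have xin : x \in q by [].
rewrite in_cons mem_rcons in_cons xin !orbT; split => //.
  by apply: contraNneq nu => <-; rewrite mem_rcons in_cons xin orbT.
move: U; rewrite rcons_uniq => /andP [zq _].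
by apply: contraNneq zq => <-.
Qed.


Lemma good_final r s t (u v : vertex r s t) m F bound : good u v m F -> u != v -> m <= bound ->
  exists P : 'I_(2 * r + 2) -> seq (vertex r s t),
    (forall i, is_path u v (P i)) /\ int_disjoint P /\ (forall i, plen (P i) <= bound).
Proof.
case=> H1 H2 H3 uv mb; exists (fun i => F (val i)); split; [|split].
- by move=> i; apply: H1 (ltn_ord i).
- move=> i i' ii' x xi xi'.
  have /and4P [/eqP hh /eqP hl _ U] := H1 _ (ltn_ord i).
  case: (interior_mem hh hl U xi) => xin nu nv.
  case: (H2 _ _ (ltn_ord i) (ltn_ord i') x xin xi') => [xu|[xv|E]].
  + by rewrite xu eqxx in nu.
  + by rewrite xv eqxx in nv.
  + by move: ii'; rewrite -(inj_eq val_inj) /= E eqxx.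
- by move=> i; apply: leq_trans (H3 _ (ltn_ord i)) mb.
Qed.

Lemma ord3_cases (d : 'I_3) : [\/ d = L0, d = L1 | d = L2].
Proof. by case: d => [[|[|[|]]] Hd] //; [apply: Or31|apply: Or32|apply: Or33]; apply: val_inj. Qed.

Theorem lemma15 (r s t : nat) (u v : vertex r s t) :
  1 <= r -> r <= s -> s <= t ->
  vA u = vA v -> vB u = vB v -> vC u <> vC v -> vd u <> vd v ->
  exists P : 'I_(2 * r + 2) -> seq (vertex r s t),
    (forall i, is_path u v (P i)) /\
    int_disjoint P /\
    (forall i,
       plen (P i) <=
       (if ((val (vd u) == 1) && (val (vd v) == 2)) || ((val (vd u) == 2) && (val (vd v) == 1))
        then t + 8 else t + 6)).
Proof.
move=> r1 rs st.
case: u => [[[A B] C] d]; case: v => [[[A' B'] C'] d']; rewrite /vA /vB /vC /vd /= => <- <- CC dd.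
have uv : (A, B, C, d) != (A, B, C', d') :> vertex r s t.
  by apply/negP => /eqP [] /CC.
have [j Cj] : exists j, C j != C' j.
  apply/existsP; apply: contraT => /existsPn H; case: CC; apply/ffunP => x.
  by move: (H x); rewrite negbK => /eqP.
have Cj' : C' j != C j by rewrite eq_sym.
have CC' : C != C' by apply/eqP.
have CC'' : C' != C by rewrite eq_sym.
case: (ord3_cases d) => Ed; case: (ord3_cases d') => Ed'; subst d d'; try by case: dd.
- by apply: (good_final (good_rev (good10 A B r1 rs st Cj')) uv).
- by apply: (good_final (good_rev (good20 A B r1 rs st Cj')) uv).
- by apply: (good_final (good10 A B r1 rs st Cj) uv).
- by apply: (good_final (good12 A B r1 rs CC') uv).
- by apply: (good_final (good20 A B r1 rs st Cj) uv).
- by apply: (good_final (good_rev (good12 A B r1 rs CC'')) uv).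
Qed.
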